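(* Let $\mathcal{N}\subset\mathbb{R}^d$ be compact, $T>0$, $x^0,x^1\in\mathbb{R}^N$, and let $\nu\mapsto(\mathbf{A}(\nu),\mathbf{B}(\nu))\in\mathbb{R}^{N\times N}\times\mathbb{R}^{N\times M}$ be Lipschitz continuous on $\mathcal{N}$. Assume the uniform controllability condition: there are constants $0<\Lambda_-\le\Lambda_+$ with $\Lambda_- I\le \Lambda_\nu\le\Lambda_+ I$ (as quadratic forms) for all $\nu\in\mathcal{N}$, where $\Lambda_\nu$ is the Gramian defined in the context. For $\nu\in\mathcal N$ let $\varphi^0_\nu\in\mathbb{R}^N$ be the unique solution of $\Lambda_\nu\varphi^0_\nu=x^1-e^{T\mathbf{A}_\nu}x^0$, and let $C_\varphi$ be the Lipschitz constant of the map $\nu\mapsto\varphi^0_\nu$. Given $\varepsilon>0$, run the offline greedy control algorithm (described in the context) with a discretisation constant $\delta$ satisfying $\delta\le \varepsilon/(2C_\varphi\Lambda_-)$, and suppose it selects $n\ge1$ parameter values $\nu_1,\dots,\nu_n$ with corresponding vectors $\varphi^0_j:=\varphi^0_{\nu_j}$; write $\Phi^0_j=\mathrm{span}\{\varphi^0_1,\dots,\varphi^0_j\}$. Then, with $\gamma=\Lambda_-/(2\Lambda_+)\le 1/2$, $$|\varphi^0_1|\ge\gamma\max_{\nu\in\mathcal N}|\varphi^0_\nu|,\qquad \mathrm{dist}(\varphi^0_{j+1},\Phi^0_j)\ge\gamma\max_{\nu\in\mathcal N}\mathrm{dist}(\varphi^0_\nu,\Phi^0_j)\ \ (j=1,\dots,n-1),$$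 i.e. the algorithm is a weak greedy algorithm with constant $\gamma$ for the compact set $\{\varphi^0_\nu:\nu\in\mathcal N\}$, and the final approximation error satisfies $$\max_{\nu\in\mathcal N}\mathrm{dist}(\varphi^0_\nu,\Phi^0_n)<\varepsilon/\Lambda_- .$$
   Context: Control system (for each parameter $\nu\in\mathcal N$): $x'(t)=\mathbf{A}_\nu x(t)+\mathbf{B}_\nu u(t)$, $0<t<T$, $x(0)=x^0$, with $\mathbf{A}_\nu=\mathbf{A}(\nu)$, $\mathbf{B}_\nu=\mathbf{B}(\nu)$. Its (controllability) Gramian is $\Lambda_\nu=\int_0^T e^{(T-t)\mathbf{A}_\nu}\mathbf{B}_\nu\mathbf{B}_\nu^{*}e^{(T-t)\mathbf{A}_\nu^{*}}\,dt$. The vector $\varphi^0_\nu=\Lambda_\nu^{-1}(x^1-e^{T\mathbf A_\nu}x^0)$ is the minimiser of $J_\nu(\varphi^0)=\frac12\int_0^T|\mathbf B_\nu^*\varphi(t)|^2dt-\langle x^1,\varphi^0\rangle+\langle x^0,\varphi(0)\rangle$, where $\varphi(t)=e^{(T-t)\mathbf A_\nu^*}\varphi^0$, and $u_\nu=\mathbf B_\nu^*e^{(T-t)\mathbf A_\nu^*}\varphi^0_\nu$ is the minimal $L^2$-norm control steering $x^0$ to $x^1$. For a subspace $\Phi\subset\mathbb R^N$, $\Lambda_\nu\Phi=\{\Lambda_\nu\psi:\psi\in\Phi\}$; $\mathrm{dist}$ is Euclidean distance. Offline greedy control algorithm with tolerance $\varepsilon>0$ and discretisation constant $\delta>0$: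 Step 1: choose a finite set $\tilde{\mathcal N}\subset\mathcal N$ with $\mathrm{dist}(\nu,\tilde{\mathcal N})<\delta$ for all $\nu\in\mathcal N$. Step 2: if $\max_{\tilde\nu\in\tilde{\mathcal N}}|x^1-e^{T\mathbf A_{\tilde\nu}}x^0|<\varepsilon/2$ stop (with $n=0$); otherwise let $\nu_1$ be a maximiser of $\tilde\nu\mapsto|x^1-e^{T\mathbf A_{\tilde\nu}}x^0|$ over $\tilde{\mathcal N}$ and set $\varphi^0_1=\varphi^0_{\nu_1}$. Step 3: having $\nu_1,\dots,\nu_j$, if $\max_{\tilde\nu\in\tilde{\mathcal N}}\mathrm{dist}(x^1-e^{T\mathbf A_{\tilde\nu}}x^0,\Lambda_{\tilde\nu}\Phi^0_j)<\varepsilon/2$ stop (with $n=j$); otherwise let $\nu_{j+1}$ be a maximiser over $\tilde{\mathcal N}$ of $\tilde\nu\mapsto \mathrm{dist}(x^1-e^{T\mathbf A_{\tilde\nu}}x^0,\Lambda_{\tilde\nu}\Phi^0_j)$, set $\varphi^0_{j+1}=\varphi^0_{\nu_{j+1}}$ and repeat Step 3. *)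

(* Defs.v *)
From HB Require Import structures.
From mathcomp Require Import all_boot all_order all_algebra.
From mathcomp Require Import all_classical all_reals all_analysis.
Set Implicit Arguments. Unset Strict Implicit. Unset Printing Implicit Defensive.
Import Order.TTheory GRing.Theory Num.Theory.
Import numFieldNormedType.Exports.
Local Open Scope classical_set_scope.
Local Open Scope ring_scope.

Definition enorm {R : realType} {n : nat} (x : 'cV[R]_n) : R :=
  Num.sqrt (\sum_(i < n) x i 0 ^+ 2).

Definition expm {R : realType} {n : nat} (A : 'M[R]_n) : 'M[R]_n :=
  \matrix_(i, j) (limn (series (fun k : nat => ((A ^+ k) i j / (k`!)%:R : R)))).

Definition gramian {R : realType} {N M : nat} (T : R)
    (A : 'M[R]_N) (B : 'M[R]_(N, M)) : 'M[R]_N :=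
  \matrix_(i, j) Rintegral (@lebesgue_measure R) `[0%R, T]
    (fun t => (expm ((T - t) *: A) *m B *m B^T *m expm ((T - t) *: A^T)) i j).

Definition phi0 {R : realType} {N M : nat} (T : R)
    (A : 'M[R]_N) (B : 'M[R]_(N, M)) (x0 x1 : 'cV[R]_N) : 'cV[R]_N :=
  invmx (gramian T A B) *m (x1 - expm (T *: A) *m x0).

Definition lincomb {R : realType} {N : nat} (v : nat -> 'cV[R]_N) (j : nat)
    (c : nat -> R) : 'cV[R]_N :=
  \sum_(i < j) c i *: v i.

Definition dist_span {R : realType} {N : nat} (x : 'cV[R]_N)
    (v : nat -> 'cV[R]_N) (j : nat) : R :=
  inf [set enorm (x - lincomb v j c) | c in [set: nat -> R]].

Definition dist_img_span {R : realType} {N : nat} (x : 'cV[R]_N) (L : 'M[R]_N)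
    (v : nat -> 'cV[R]_N) (j : nat) : R :=
  inf [set enorm (x - L *m lincomb v j c) | c in [set: nat -> R]].

(* Main.v *)
Require Import Defs.
From HB Require Import structures.
From mathcomp Require Import all_boot all_order all_algebra.
From mathcomp Require Import all_classical all_reals all_analysis.
From mathcomp Require Import ring lra.
Import Order.TTheory GRing.Theory Num.Theory.
Import numFieldNormedType.Exports.
Local Open Scope classical_set_scope.
Local Open Scope ring_scope.


Section Aux.
Variable R : realType.
Variable N : nat.
Implicit Types x y z : 'cV[R]_N.

Definition dot x y : R := (x^T *m y) 0 0.

Lemma dotC x y : dot x y = dot y x.
Proof. by rewrite /dot -(trmxK (y^T *m x)) trmx_mul trmxK [in RHS]mxE. Qed.

Lemma dotDr x y z : dot x (y + z) = dot x y + dot x z.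
Proof. by rewrite /dot mulmxDr mxE. Qed.
Lemma dotZr x a y : dot x (a *: y) = a * dot x y.
Proof. by rewrite /dot -scalemxAr mxE. Qed.
Lemma dotNr x y : dot x (- y) = - dot x y.
Proof. by rewrite /dot mulmxN mxE. Qed.
Lemma dotBr x y z : dot x (y - z) = dot x y - dot x z.
Proof. by rewrite dotDr dotNr. Qed.
Lemma dotDl x y z : dot (y + z) x = dot y x + dot z x.
Proof. by rewrite dotC dotDr !(dotC x). Qed.
Lemma dotZl x a y : dot (a *: y) x = a * dot y x.
Proof. by rewrite dotC dotZr dotC. Qed.
Lemma dotBl x y z : dot (y - z) x = dot y x - dot z x.
Proof. by rewrite dotC dotBr !(dotC x). Qed.

Lemma dot_adj (L : 'M[R]_N) y z : dot (L^T *m y) z = dot y (L *m z).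
Proof. by rewrite /dot trmx_mul trmxK mulmxA. Qed.

Lemma dot_sum x : dot x x = \sum_(i < N) x i 0 ^+ 2.
Proof. by rewrite /dot mxE; apply: eq_bigr => i _; rewrite mxE expr2. Qed.

Lemma dot_ge0 x : 0 <= dot x x.
Proof. by rewrite dot_sum; apply: sumr_ge0 => i _; exact: sqr_ge0. Qed.

Lemma enormE x : enorm x = Num.sqrt (dot x x).
Proof. by rewrite dot_sum. Qed.

Lemma enorm_ge0 x : 0 <= enorm x.
Proof. exact: sqrtr_ge0. Qed.

Lemma enorm_sq x : enorm x ^+ 2 = dot x x.
Proof. by rewrite enormE sqr_sqrtr // dot_ge0. Qed.

Lemma dot_eq0 {x} : dot x x = 0 -> x = 0.
Proof.
rewrite dot_sum => /psumr_eq0P H.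
apply/matrixP => i j; rewrite (ord1 j) mxE.
have /eqP := H (fun k _ => sqr_ge0 (x k 0)) i isT.
by rewrite sqrf_eq0 => /eqP.
Qed.

Lemma dot_expand x y : dot (x - y) (x - y) = dot x x - 2 * dot x y + dot y y.
Proof. rewrite !dotBl !dotBr (dotC y x); ring. Qed.

Lemma dot_expandD x y : dot (x + y) (x + y) = dot x x + 2 * dot x y + dot y y.
Proof. rewrite !dotDl !dotDr (dotC y x); ring. Qed.

Lemma cauchy_schwarz x y : dot x y <= enorm x * enorm y.
Proof.
have ex := enorm_ge0 x; have ey := enorm_ge0 y.
have [b0|bpos] := eqVneq (dot y y) 0.
  have -> : dot x y = 0 by rewrite (dot_eq0 b0) -[0 : 'cV_N](scale0r 0) dotZr mul0r.
  by apply: mulr_ge0.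
have bp : 0 < dot y y by rewrite lt_def bpos dot_ge0.
have := dot_ge0 (dot y y *: x - dot x y *: y).
rewrite dot_expand !dotZl !dotZr => H.
have H2 : dot x y ^+ 2 <= enorm x ^+ 2 * enorm y ^+ 2.
  rewrite !enorm_sq; nra.
rewrite -exprMn in H2.
have P0 := mulr_ge0 ex ey.
set P := enorm x * enorm y in H2 P0 *.
rewrite leNgt; apply/negP => hD.
have : 0 < dot x y + P by lra.
nra.
Qed.

Lemma enorm_triangle x y : enorm (x + y) <= enorm x + enorm y.
Proof.
have ex := enorm_ge0 x; have ey := enorm_ge0 y; have exy := enorm_ge0 (x + y).
have cs := cauchy_schwarz x y.
have H : enorm (x + y) ^+ 2 <= (enorm x + enorm y) ^+ 2.
  rewrite enorm_sq dot_expandD sqrrD !enorm_sq; lra.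
nra.
Qed.

Lemma form_bounds (L : 'M[R]_N) m p : 0 < m -> m <= p -> L^T = L ->
  (forall x, m * enorm x ^+ 2 <= (x^T *m L *m x) 0 0 /\ (x^T *m L *m x) 0 0 <= p * enorm x ^+ 2) ->
  [/\ L \in unitmx, forall x, m * enorm x <= enorm (L *m x)
    & forall x, enorm (L *m x) <= p * enorm x].
Proof.
move=> m0 mp Ls H.
have q x : (x^T *m L *m x) 0 0 = dot x (L *m x) by rewrite /dot mulmxA.
split.
- rewrite unitmxE unitfE; apply/negP => /det0P [v v0 vL].
  have := (H v^T).1; rewrite trmxK vL mul0mx mxE enorm_sq => h.
  have : dot v^T v^T = 0.
    have := dot_ge0 v^T. nra.
  move=> /dot_eq0 /eqP; rewrite trmx_eq0 => /eqP vv; by rewrite vv eqxx in v0.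
- move=> x; have [h _] := H x; rewrite q in h.
  have cs := cauchy_schwarz x (L *m x).
  have := enorm_ge0 x; have := enorm_ge0 (L *m x). nra.
- move=> x; set y := L *m x.
  have Hq z : 0 <= dot z (L *m z) <= p * dot z z.
    have [h1 h2] := H z; rewrite q -enorm_sq in h1 h2 *.
    have ez := enorm_ge0 z. apply/andP; split; nra.
  have sym z w : dot w (L *m z) = dot z (L *m w).
    by rewrite -dot_adj Ls dotC.
  pose z := p *: x.
  have e1 : dot (z + y) (L *m (z + y)) - dot (z - y) (L *m (z - y)) = 4 * dot y (L *m z).
    rewrite mulmxDr mulmxBr !(dotDl, dotDr, dotNr, dotC (- _) _, dotNr) (sym y z) (dotC (L *m z) y) (dotC (L *m y) y); ring.
  have e2 : dot y (L *m z) = p * dot y y by rewrite /z -scalemxAr dotZr.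
  have e3 : dot (z + y) (z + y) + dot (z - y) (z - y) = 2 * (p ^+ 2 * dot x x) + 2 * dot y y.
    rewrite dot_expandD dot_expand /z !dotZl !dotZr; ring.
  have [a1 a2] := andP (Hq (z + y)); have [b1 b2] := andP (Hq (z - y)).
  have c1 := dot_ge0 (z + y); have c2 := dot_ge0 (z - y).
  have H1 : dot y y <= p ^+ 2 * dot x x.
    have p0 : 0 < p by lra.
    nra.
  have ex := enorm_ge0 x; have ey := enorm_ge0 y.
  rewrite -!enorm_sq -exprMn in H1.
  have P0 : 0 <= p * enorm x by apply: mulr_ge0 => //; lra.
  rewrite leNgt; apply/negP => hD.
  have : 0 < enorm y + p * enorm x by lra.
  nra.
Qed.

Lemma trmxX (X : 'M[R]_N) k : (X^T) ^+ k = (X ^+ k)^T.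
Proof.
elim: k => [|k IH]; first by rewrite !expr0 trmx1.
by rewrite exprS exprSr IH -!mulmxE trmx_mul.
Qed.

Lemma trmxZ' (X : 'M[R]_N) (s : R) : (s *: X)^T = s *: X^T.
Proof. by apply/matrixP => i j; rewrite !mxE. Qed.

Lemma expm_tr (X : 'M[R]_N) : (expm X)^T = expm X^T.
Proof.
apply/matrixP => i j; rewrite !mxE.
by congr (limn (series _)); apply: funext => k; rewrite trmxX mxE.
Qed.

Lemma gramian_sym M0 T (A : 'M[R]_N) (B : 'M[R]_(N, M0)) :
  (gramian T A B)^T = gramian T A B.
Proof.
apply/matrixP => i j; rewrite !mxE.
congr (Rintegral _ _ _); apply: funext => t.
rewrite -trmxZ' -expm_tr.
set E := expm _.
have hM : (E *m B *m B^T *m E^T)^T = E *m B *m B^T *m E^T.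
  by rewrite !trmx_mul !trmxK !mulmxA.
by rewrite -[in LHS]hM mxE.
Qed.

Lemma inf_img_le (F : (nat -> R) -> R) c : (forall c, 0 <= F c) ->
  inf [set F c | c in [set: nat -> R]] <= F c.
Proof.
move=> F0; apply: ge_inf; last by exists c.
by exists 0 => _ [c' _ <-].
Qed.

Lemma inf_img_ge (F : (nat -> R) -> R) a : (forall c, a <= F c) ->
  a <= inf [set F c | c in [set: nat -> R]].
Proof.
move=> Fa; apply: lb_le_inf; first by exists (F (fun _ => 0)), (fun _ => 0).
by move=> _ [c _ <-].
Qed.
Lemma arithA (x w rw r0 pe k eps : R) : x <= w + k -> w <= rw -> rw <= r0 ->
  r0 <= pe -> k <= eps / 2 -> eps / 2 <= r0 -> x <= 2 * pe.
Proof. move=> *; lra. Qed.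
Lemma arithB (x w rw k eps : R) : x <= w + k -> w <= rw -> rw < eps / 2 ->
  k <= eps / 2 -> x < eps.
Proof. move=> *; lra. Qed.
End Aux.

(* Parameters nu live in R^d = 'cV[R]_d; states in R^N = 'cV[R]_N.
   The greedy selections nu_1, ..., nu_n are  nu 0, ..., nu (n-1)  and
   Phi^0_j = span{phi0(nu 0), ..., phi0(nu (j-1))}. *)
Theorem theorem2 (R : realType) (d N M : nat) (Nset : set 'cV[R]_d)
  (T : R) (x0 x1 : 'cV[R]_N)
  (A : 'cV[R]_d -> 'M[R]_N) (B : 'cV[R]_d -> 'M[R]_(N, M))
  (Lam_m Lam_p Cphi eps delta : R)
  (Ntilde : seq 'cV[R]_d) (n : nat) (nu : nat -> 'cV[R]_d) :
  let phi := fun v : 'cV[R]_d => phi0 T (A v) (B v) x0 x1 in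
  let Lam := fun v : 'cV[R]_d => gramian T (A v) (B v) in
  let r := fun v : 'cV[R]_d => x1 - expm (T *: A v) *m x0 in
  let gamma := Lam_m / (2 * Lam_p) in
  (* setting *)
  compact Nset -> 0 < T ->
  (* nu |-> (A nu, B nu) is Lipschitz on Nset *)
  (exists LA : R, forall v w, v \in Nset -> w \in Nset ->
      `|A v - A w| <= LA * enorm (v - w)) ->
  (exists LB : R, forall v w, v \in Nset -> w \in Nset ->
      `|B v - B w| <= LB * enorm (v - w)) ->
  (* uniform controllability: Lam_m I <= Lam_nu <= Lam_p I as quadratic forms *)
  0 < Lam_m -> Lam_m <= Lam_p ->
  (forall v, v \in Nset -> forall x : 'cV[R]_N,
      Lam_m * enorm x ^+ 2 <= (x^T *m Lam v *m x) 0 0 /\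
      (x^T *m Lam v *m x) 0 0 <= Lam_p * enorm x ^+ 2) ->
  (* Cphi is a Lipschitz constant of nu |-> phi^0_nu on Nset *)
  0 < Cphi ->
  (forall v w, v \in Nset -> w \in Nset ->
      enorm (phi v - phi w) <= Cphi * enorm (v - w)) ->
  (* tolerance and discretisation constant *)
  0 < eps -> 0 < delta -> delta <= eps / (2 * Cphi * Lam_m) ->
  (* Step 1: finite delta-net Ntilde of Nset *)
  (forall w, w \in Ntilde -> w \in Nset) ->
  (forall v, v \in Nset -> exists2 w, w \in Ntilde & enorm (v - w) < delta) ->
  (* the algorithm selects n >= 1 parameters *)
  (1 <= n)%N ->
  (* Step 2: no stop at n = 0; nu_1 maximises |r| over Ntilde *)
  nu 0%N \in Ntilde ->
  (forall w, w \in Ntilde -> enorm (r w) <= enorm (r (nu 0%N))) ->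
  eps / 2 <= enorm (r (nu 0%N)) ->
  (* Step 3, for j = 1, ..., n-1: no stop at j; nu_{j+1} is a maximiser *)
  (forall j : nat, (1 <= j)%N -> (j < n)%N ->
      [/\ nu j \in Ntilde,
          (forall w, w \in Ntilde ->
             dist_img_span (r w) (Lam w) (phi \o nu) j <=
             dist_img_span (r (nu j)) (Lam (nu j)) (phi \o nu) j)
        & eps / 2 <= dist_img_span (r (nu j)) (Lam (nu j)) (phi \o nu) j]) ->
  (* Step 3 at j = n: the algorithm stops *)
  (forall w, w \in Ntilde ->
      dist_img_span (r w) (Lam w) (phi \o nu) n < eps / 2) ->
  (* conclusions: weak greedy with constant gamma, and final error bound *)
  [/\ gamma <= 1 / 2,
      (forall v, v \in Nset -> gamma * enorm (phi v) <= enorm (phi (nu 0%N))),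
      (forall j : nat, (1 <= j)%N -> (j < n)%N -> forall v, v \in Nset ->
          gamma * dist_span (phi v) (phi \o nu) j
            <= dist_span (phi (nu j)) (phi \o nu) j)
    & (forall v, v \in Nset ->
          dist_span (phi v) (phi \o nu) n < eps / Lam_m)].
Proof.
move=> phi Lam r gamma Hcomp HT _ _ Hm Hmp Hform HC HLip He Hd Hdd Hsub Hnet
  Hn Hnu0 Hmax0 Hstop0 Hstep Hstop.
have Hp : 0 < Lam_p by lra.
have FB w : w \in Nset -> [/\ Lam w \in unitmx,
    forall x, Lam_m * enorm x <= enorm (Lam w *m x)
  & forall x, enorm (Lam w *m x) <= Lam_p * enorm x].
  move=> wN; apply: form_bounds => //; first exact: gramian_sym.
  exact: Hform.
have Hphi w : w \in Nset -> Lam w *m phi w = r w.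
  by move=> /FB [u _ _]; rewrite /phi /phi0 mulmxA mulmxV // mul1mx.
set V := phi \o nu.
have Hdist j w : w \in Nset ->
    Lam_m * dist_span (phi w) V j <= dist_img_span (r w) (Lam w) V j /\
    dist_img_span (r w) (Lam w) V j <= Lam_p * dist_span (phi w) V j.
  move=> wN; have [_ lo hi] := FB w wN.
  have key c : r w - Lam w *m lincomb V j c = Lam w *m (phi w - lincomb V j c).
    by rewrite mulmxBr Hphi.
  split.
    rewrite /dist_img_span; apply: inf_img_ge => c; rewrite key.
    apply: le_trans (lo _); apply: ler_wpM2l; first exact: ltW.
    apply: (@inf_img_le _ (fun c => enorm (phi w - lincomb V j c))) => c'; exact: enorm_ge0.
  have h : dist_img_span (r w) (Lam w) V j / Lam_p <= dist_span (phi w) V j.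
    apply: inf_img_ge => c; rewrite ler_pdivrMr // mulrC.
    apply: le_trans (hi _); rewrite -key.
    by apply: (@inf_img_le _ (fun c => enorm (r w - Lam w *m lincomb V j c))) => c'; exact: enorm_ge0.
  by rewrite ler_pdivrMr // mulrC in h.
have Hlipd j v w : dist_span (phi v) V j <= dist_span (phi w) V j + enorm (phi v - phi w).
  rewrite -lerBlDr; apply: inf_img_ge => c; rewrite lerBlDr.
  apply: le_trans (_ : enorm (phi v - lincomb V j c) <= _).
    by apply: (@inf_img_le _ (fun c => enorm (phi v - lincomb V j c))) => c'; exact: enorm_ge0.
  have -> : phi v - lincomb V j c = (phi w - lincomb V j c) + (phi v - phi w).
    by rewrite [RHS]addrC addrA subrK.
  exact: enorm_triangle.
have Hdd' : Lam_m * (Cphi * delta) <= eps / 2.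
  have h2 : 0 < 2 * Cphi * Lam_m by rewrite !mulr_gt0.
  rewrite ler_pdivlMr // in Hdd. lra.
have Hnear v : v \in Nset -> exists2 w, w \in Ntilde & enorm (phi v - phi w) <= Cphi * delta.
  move=> vN; have [w wT vw] := Hnet v vN; exists w => //.
  apply: le_trans (HLip v w vN (Hsub w wT)) _.
  by apply: ler_wpM2l; [exact: ltW | exact: ltW].
split.
- rewrite /gamma ler_pdivrMr; last by rewrite mulr_gt0.
  lra.
- move=> v vN; have [w wT vw] := Hnear v vN.
  have wN := Hsub w wT; have n0N := Hsub _ Hnu0.
  have [_ lo _] := FB w wN; have [_ _ hi0] := FB _ n0N.
  have f1 : enorm (phi v) <= enorm (phi w) + Cphi * delta.
    apply: le_trans (_ : enorm (phi v) <= enorm (phi w) + enorm (phi v - phi w)) _.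
      by rewrite -{1}(subrK (phi w) (phi v)) addrC; exact: enorm_triangle.
    by rewrite lerD2l.
  have f2 := lo (phi w); rewrite Hphi // in f2.
  have f3 := Hmax0 w wT.
  have f4 := hi0 (phi (nu 0%N)); rewrite Hphi // in f4.
  have s2 : Lam_m * enorm (phi v) <= Lam_m * (enorm (phi w) + Cphi * delta).
    by apply: ler_wpM2l => //; exact: ltW.
  rewrite /gamma mulrAC ler_pdivrMr; last by rewrite mulr_gt0.
  rewrite mulrDr in s2. rewrite [X in _ <= X]mulrC -mulrA.
  exact: (@arithA R _ _ _ _ _ _ _ s2 f2 f3 f4 Hdd' Hstop0).
- move=> j j1 jn v vN; have [w wT vw] := Hnear v vN.
  have wN := Hsub w wT.
  have [njT Hmaxj Hstopj] := Hstep j j1 jn.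
  have njN := Hsub _ njT.
  have f1 : dist_span (phi v) V j <= dist_span (phi w) V j + Cphi * delta.
    apply: le_trans (Hlipd j v w) _; by rewrite lerD2l.
  have [f2 _] := Hdist j w wN.
  have f3 := Hmaxj w wT.
  have [_ f4] := Hdist j (nu j) njN.
  have s2 : Lam_m * dist_span (phi v) V j <= Lam_m * (dist_span (phi w) V j + Cphi * delta).
    by apply: ler_wpM2l => //; exact: ltW.
  rewrite /gamma mulrAC ler_pdivrMr; last by rewrite mulr_gt0.
  rewrite mulrDr in s2. rewrite [X in _ <= X]mulrC -mulrA.
  exact: (@arithA R _ _ _ _ _ _ _ s2 f2 f3 f4 Hdd' Hstopj).
- move=> v vN; have [w wT vw] := Hnear v vN.
  have wN := Hsub w wT.
  have f1 : dist_span (phi v) V n <= dist_span (phi w) V n + Cphi * delta.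
    apply: le_trans (Hlipd n v w) _; by rewrite lerD2l.
  have [f2 _] := Hdist n w wN.
  have f3 := Hstop w wT.
  have s2 : Lam_m * dist_span (phi v) V n <= Lam_m * (dist_span (phi w) V n + Cphi * delta).
    by apply: ler_wpM2l => //; exact: ltW.
  rewrite ltr_pdivlMr // mulrC.
  rewrite mulrDr in s2.
  exact: (@arithB R _ _ _ _ _ s2 f2 f3 Hdd').
Qed.
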